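(* Let $\langle E,\rightarrow\rangle$ be a computation, $b$ a regular predicate, and $e\in E$. Then $J_b(e)$ is a join-irreducible element of the distributive lattice $\langle \mathcal{C}_b(E);\subseteq\rangle$.
   Context: A computation is a directed graph $\langle E, \rightarrow\rangle$ whose vertices (events) are partitioned among processes $p_1,\dots,p_n$, each process $p_i$ having an initial event $\bot_i$ and a final event $\top_i$; $\top$ denotes the set of final events. A subset $C\subseteq E$ is a consistent cut if for every edge $(u,v)$, $v\in C$ implies $u\in C$; $\emptyset$ and $E$ are trivial. A predicate is regular if whenever consistent cuts $C_1,C_2$ satisfy it, so do $C_1\cap C_2$ and $C_1\cup C_2$. $\mathcal{C}_b(E)$ denotes the set of non-trivial consistent cuts of $\langle E,\rightarrow\rangle$ satisfying $b$ together with the two trivial cuts $\emptyset$ and $E$ (the trivial cuts are treated as satisfying $b$); ordered by inclusion it is a distributive lattice with join $\cup$ and meet $\cap$. For an event $e$, $J_b(e)$ is the least consistent cut of $\langle E,\rightarrow\rangle$ that satisfies $b$ and contains $e$; if no such cut exists or $e\in\top$, $J_b(e)=E$. An element $a$ of a lattice is join-irreducible if it is not the least element and $a=x\sqcup y$ implies $a=x$ or $a=y$. *)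

(* Defs.v *)
From mathcomp Require Import all_boot.
Set Implicit Arguments. Unset Strict Implicit. Unset Printing Implicit Defensive.

(* A computation <E, ->> : events are the elements of a finite type T (E = the
   whole type), edges are the relation [edge]; [proc] partitions events among
   the processes p_1..p_n (indexed by 'I_n); [bot i], [top i] are the initial
   and final events of p_i.  "x occurs before y" = reachability [connect edge]. *)
Definition is_computation (T : finType) (edge : rel T) (n : nat)
    (proc : T -> 'I_n) (bot top : 'I_n -> T) : Prop :=
  [/\ forall i, proc (bot i) = i /\ proc (top i) = i /\ bot i != top i,
      forall e, connect edge (bot (proc e)) e,
      forall e, connect edge e (top (proc e)),
      forall i j, connect edge (bot i) (bot j) &
      forall i j, connect edge (top i) (top j)].

Definition finals (T : finType) (n : nat) (top : 'I_n -> T) : {set T} :=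
  [set top i | i in 'I_n].

Definition consistent (T : finType) (edge : rel T) (C : {set T}) : bool :=
  [forall u, forall v, edge u v ==> (v \in C) ==> (u \in C)].

Definition regular (T : finType) (edge : rel T) (b : pred {set T}) : Prop :=
  forall C1 C2 : {set T}, consistent edge C1 -> consistent edge C2 ->
    b C1 -> b C2 -> b (C1 :&: C2) /\ b (C1 :|: C2).

Definition in_Cb (T : finType) (edge : rel T) (b : pred {set T}) (C : {set T})
  : bool :=
  consistent edge C && [|| C == set0, C == setT | b C].

Definition least_cut (T : finType) (edge : rel T) (b : pred {set T}) (e : T)
    (C : {set T}) : bool :=
  [&& consistent edge C, b C, e \in C &
      [forall D : {set T}, [&& consistent edge D, b D & e \in D] ==> (C \subset D)]].

Definition Jb (T : finType) (edge : rel T) (n : nat) (top : 'I_n -> T)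
    (b : pred {set T}) (e : T) : {set T} :=
  if e \in finals top then setT
  else match [pick C | least_cut edge b e C] with
       | Some C => C
       | None => setT
       end.

Definition join_irreducible_Cb (T : finType) (edge : rel T) (b : pred {set T})
    (a : {set T}) : Prop :=
  in_Cb edge b a /\ a != set0 /\
  forall x y : {set T}, in_Cb edge b x -> in_Cb edge b y ->
    a = x :|: y -> a = x \/ a = y.

(* Main.v *)
Require Import Defs.
From mathcomp Require Import all_boot.
Set Implicit Arguments. Unset Strict Implicit.

Lemma cons_edge (T : finType) (edge : rel T) (C : {set T}) u v :
  consistent edge C -> edge u v -> v \in C -> u \in C.
Proof.
by move=> /forallP /(_ u) /forallP /(_ v) /implyP H /H /implyP.
Qed.

Lemma cons_connect (T : finType) (edge : rel T) (C : {set T}) u v :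
  consistent edge C -> connect edge u v -> v \in C -> u \in C.
Proof.
move=> hC /connectP [p hp ->]; elim: p u hp => [|y p IH] u /=; first by [].
move=> /andP [hu hp] hl.
exact: (cons_edge hC hu (IH _ hp hl)).
Qed.

Lemma top_full (T : finType) (edge : rel T) (n : nat) (proc : T -> 'I_n)
    (bot top : 'I_n -> T) (C : {set T}) i :
  is_computation edge proc bot top -> consistent edge C -> top i \in C ->
  C = setT.
Proof.
case=> _ _ H3 _ H5 hC hi; apply/setP => x; rewrite inE.
apply: (cons_connect hC (H3 x)).
exact: (cons_connect hC (H5 _ i) hi).
Qed.

Theorem lemma4 (T : finType) (edge : rel T) (n : nat) (proc : T -> 'I_n)
    (bot top : 'I_n -> T) (b : pred {set T}) (e : T) :
  is_computation edge proc bot top ->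
  regular edge b ->
  join_irreducible_Cb edge b (Jb edge top b e).
Proof.
move=> hcomp _.
have hT : [set: T] != set0 by apply/set0Pn; exists e; rewrite inE.
have hconsT : consistent edge [set: T].
  by apply/forallP => u; apply/forallP => v; rewrite !inE; apply/implyP.
have setT_ok : join_irreducible_Cb edge b [set: T].
  split; first by rewrite /in_Cb hconsT eqxx orbT.
  split=> // x y /andP [hx _] /andP [hy _] hxy.
  have : top (proc e) \in x :|: y by rewrite -hxy inE.
  rewrite inE => /orP [h|h].
    by left; rewrite (top_full hcomp hx h).
  by right; rewrite (top_full hcomp hy h).
rewrite /Jb; case: ifP => _ //.
case: pickP => [C hC|_] //.
case/and4P: hC => hc hb he hmin.
split; first by rewrite /in_Cb hc hb !orbT.
split; first by apply/set0Pn; exists e.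
move=> x y hx hy hxy.
have key : forall z, in_Cb edge b z -> z \subset C -> e \in z -> C = z.
  move=> z /andP [hz /orP [/eqP z0|/orP [/eqP zT|bz]]] hsub hez.
  - by rewrite z0 inE in hez.
  - by apply/eqP; rewrite eqEsubset hsub zT subsetT.
  - apply/eqP; rewrite eqEsubset hsub andbT.
    by move/forallP: hmin => /(_ z) /implyP; apply; rewrite hz bz hez.
have : e \in x :|: y by rewrite -hxy.
rewrite inE => /orP [h|h].
  by left; apply: key => //; rewrite hxy subsetUl.
by right; apply: key => //; rewrite hxy subsetUr.
Qed.
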